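(* In the $(3,2,2)$ scenario, the correlation $p(\vec x|\vec a)=\tfrac12\delta_{\vec x,(a_3,a_1,a_2)}+\tfrac12\delta_{\vec x,(\bar a_3,\bar a_1,\bar a_2)}$ (which has $p_{\rm gynin}=1$) is probabilistically consistent — it is realized by the Baumeler–Feix–Wolf classical process $p(\vec i|\vec o)=\tfrac12\delta_{\vec i,(o_3,o_1,o_2)}+\tfrac12\delta_{\vec i,(\bar o_3,\bar o_1,\bar o_2)}$ (with $I_k=O_k=\{0,1\}$) under the local interventions $p(x_k,o_k|a_k,i_k)=\delta_{x_k,i_k}\delta_{o_k,a_k}$ — but is not deterministically consistent. Consequently the set $\mathcal{DC}$ of deterministically consistent correlations is strictly contained in the set $\mathcal{PC}$ of probabilistically consistent correlations.
   Context: $(3,2,2)$ scenario: three parties, $a_k,x_k\in\{0,1\}$, $\bar a=1\oplus a$. $p_{\rm gynin}=\frac18\sum_{\vec a}\big[p((a_3,a_1,a_2)|\vec a)+p((\bar a_3,\bar a_1,\bar a_2)|\vec a)\big]$. For finite sets $I_k,O_k$, a conditional distribution $p(\vec i|\vec o)$ is a classical process if for all finite setting/outcome sets and all local interventions $p(x_k,o_k|a_k,i_k)$, the expression $\sum_{\vec i,\vec o}\prod_kp(x_k,o_k|a_k,i_k)p(\vec i|\vec o)$ is a valid conditional distribution over $\vec x$ for every $\vec a$. A process function is $\omega:\vec O\to\vec I$ with $\delta_{\vec i,\omega(\vec o)}$ a classical process. A correlation is probabilistically consistent ($\in\mathcal{PC}$) if it equals $\sum_{\vec i,\vec o}\prod_kp(x_k,o_k|a_k,i_k)p(\vec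 i|\vec o)$ for some finite $I_k,O_k$, local interventions, and a classical process $p(\vec i|\vec o)$; it is deterministically consistent ($\in\mathcal{DC}$) if moreover $p(\vec i|\vec o)$ can be taken to be a convex combination of process functions $\delta_{\vec i,\omega(\vec o)}$. *)

(* Defs.v *)
From HB Require Import structures.
From mathcomp Require Import all_boot all_order all_algebra.
From mathcomp Require Import reals.
Set Implicit Arguments. Unset Strict Implicit. Unset Printing Implicit Defensive.
Import Order.TTheory GRing.Theory Num.Theory.
Local Open Scope ring_scope.

(* Three parties; vectors are triples ((v1, v2), v3). *)

Definition cond_distr (R : realType) (Y Z : finType) (f : Y -> Z -> R) : Prop :=
  (forall y z, 0 <= f y z) /\ (forall z, \sum_(y : Y) f y z = 1).

(* A local intervention p(x,o|a,i), written M x o a i. *)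
Definition local_intervention (R : realType) (X O A I : finType)
  (M : X -> O -> A -> I -> R) : Prop :=
  (forall x o a i, 0 <= M x o a i) /\
  (forall a i, \sum_(xo : X * O) M xo.1 xo.2 a i = 1).

Definition induced (R : realType) (I1 I2 I3 O1 O2 O3 X1 X2 X3 A1 A2 A3 : finType)
  (M1 : X1 -> O1 -> A1 -> I1 -> R) (M2 : X2 -> O2 -> A2 -> I2 -> R)
  (M3 : X3 -> O3 -> A3 -> I3 -> R) (W : I1 * I2 * I3 -> O1 * O2 * O3 -> R)
  : X1 * X2 * X3 -> A1 * A2 * A3 -> R :=
  fun x a => \sum_(i : I1 * I2 * I3) \sum_(o : O1 * O2 * O3)
     M1 x.1.1 o.1.1 a.1.1 i.1.1 * M2 x.1.2 o.1.2 a.1.2 i.1.2 *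
     M3 x.2 o.2 a.2 i.2 * W i o.

Definition classical_process (R : realType) (I1 I2 I3 O1 O2 O3 : finType)
  (W : I1 * I2 * I3 -> O1 * O2 * O3 -> R) : Prop :=
  cond_distr W /\
  forall (X1 X2 X3 A1 A2 A3 : finType)
    (M1 : X1 -> O1 -> A1 -> I1 -> R) (M2 : X2 -> O2 -> A2 -> I2 -> R)
    (M3 : X3 -> O3 -> A3 -> I3 -> R),
    local_intervention M1 -> local_intervention M2 -> local_intervention M3 ->
    cond_distr (induced M1 M2 M3 W).

Definition delta_fun (R : realType) (I O : finType) (om : O -> I) : I -> O -> R :=
  fun i o => (i == om o)%:R.

Definition process_function (R : realType) (I1 I2 I3 O1 O2 O3 : finType)
  (om : O1 * O2 * O3 -> I1 * I2 * I3) : Prop :=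
  classical_process (delta_fun R om).

Definition convex_pf (R : realType) (I1 I2 I3 O1 O2 O3 : finType)
  (W : I1 * I2 * I3 -> O1 * O2 * O3 -> R) : Prop :=
  exists (n : nat) (lam : 'I_n -> R) (om : 'I_n -> O1 * O2 * O3 -> I1 * I2 * I3),
    (forall j, process_function R (om j)) /\ (forall j, 0 <= lam j) /\
    \sum_(j < n) lam j = 1 /\
    (forall i o, W i o = \sum_(j < n) lam j * delta_fun R (om j) i o).

Definition corr (R : realType) := bool * bool * bool -> bool * bool * bool -> R.

Definition PC (R : realType) (p : corr R) : Prop :=
  exists (I1 I2 I3 O1 O2 O3 : finType)
    (M1 : bool -> O1 -> bool -> I1 -> R) (M2 : bool -> O2 -> bool -> I2 -> R)
    (M3 : bool -> O3 -> bool -> I3 -> R) (W : I1 * I2 * I3 -> O1 * O2 * O3 -> R),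
    [/\ local_intervention M1, local_intervention M2, local_intervention M3,
        classical_process W & forall x a, p x a = induced M1 M2 M3 W x a].

Definition DC (R : realType) (p : corr R) : Prop :=
  exists (I1 I2 I3 O1 O2 O3 : finType)
    (M1 : bool -> O1 -> bool -> I1 -> R) (M2 : bool -> O2 -> bool -> I2 -> R)
    (M3 : bool -> O3 -> bool -> I3 -> R) (W : I1 * I2 * I3 -> O1 * O2 * O3 -> R),
    local_intervention M1 /\ local_intervention M2 /\ local_intervention M3 /\
    classical_process W /\ convex_pf W /\ (forall x a, p x a = induced M1 M2 M3 W x a).

Definition cyc (v : bool * bool * bool) : bool * bool * bool := (v.2, v.1.1, v.1.2).
Definition ncyc (v : bool * bool * bool) : bool * bool * bool := (~~ v.2, ~~ v.1.1, ~~ v.1.2).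

Definition p_gynin (R : realType) (p : corr R) : R :=
  8^-1 * \sum_(a : bool * bool * bool) (p (cyc a) a + p (ncyc a) a).

Definition p_ex (R : realType) : corr R :=
  fun x a => 2^-1 * (x == cyc a)%:R + 2^-1 * (x == ncyc a)%:R.

Definition W_BFW (R : realType) : bool * bool * bool -> bool * bool * bool -> R :=
  fun i o => 2^-1 * (i == cyc o)%:R + 2^-1 * (i == ncyc o)%:R.

Definition id_intervention (R : realType) : bool -> bool -> bool -> bool -> R :=
  fun x o a i => ((x == i) && (o == a))%:R.

(* Main.v *)
Require Import Defs.
From HB Require Import structures.
From mathcomp Require Import all_boot all_order all_algebra.
From mathcomp Require Import reals ring.
Import Order.TTheory GRing.Theory Num.Theory.
Local Open Scope ring_scope.

Lemma sum_pair (R : realType) (A B : finType) (F : A * B -> R) :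
  \sum_(p : A * B) F p = \sum_(a : A) \sum_(b : B) F (a, b).
Proof. by rewrite pair_bigA; apply: eq_bigr => -[]. Qed.

Lemma sum_delta (R : realType) (T : finType) (u : T) (G : T -> R) :
  \sum_(i : T) (i == u)%:R * G i = G u.
Proof.
rewrite (bigD1 u) //= eqxx mul1r big1 ?addr0 // => i /negbTE ->.
by rewrite mul0r.
Qed.

Lemma sum_delta1 (R : realType) (T : finType) (u : T) :
  \sum_(i : T) (i == u)%:R = 1 :> R.
Proof. by rewrite (bigD1 u) //= eqxx big1 ?addr0 // => i /negbTE ->. Qed.

Lemma le_sum_term (R : realType) (T : finType) (F : T -> R) u :
  (forall i, 0 <= F i) -> F u <= \sum_i F i.
Proof. by move=> h; rewrite (bigD1 u) //= lerDl sumr_ge0. Qed.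

Lemma ind3 (R : realType) (A B C : eqType) (o u : A * B * C) :
  (o.1.1 == u.1.1)%:R * (o.1.2 == u.1.2)%:R * (o.2 == u.2)%:R = (o == u)%:R :> R.
Proof.
case: o u => [[o1 o2] o3] [[u1 u2] u3] /=.
by rewrite -!natrM !mulnb !xpair_eqE.
Qed.

Lemma sum_bool3 (R : realType) (F : bool * bool * bool -> R) :
  \sum_(v : bool * bool * bool) F v =
  F (false,false,false) + F (false,false,true) + F (false,true,false) + F (false,true,true)
  + F (true,false,false) + F (true,false,true) + F (true,true,false) + F (true,true,true).
Proof. rewrite sum_pair sum_pair !big_bool /=. ring. Qed.

Lemma sum_triple_prod (R : realType) (X1 X2 X3 : finType) (F1 : X1 -> R) (F2 : X2 -> R) (F3 : X3 -> R) :
  \sum_(x : X1 * X2 * X3) F1 x.1.1 * F2 x.1.2 * F3 x.2 =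
  (\sum_x F1 x) * (\sum_x F2 x) * (\sum_x F3 x).
Proof.
rewrite sum_pair sum_pair /= -mulrA mulr_suml; apply: eq_bigr => x1 _.
rewrite mulr_suml mulr_sumr; apply: eq_bigr => x2 _.
rewrite mulr_sumr mulr_sumr; apply: eq_bigr => x3 _ /=.
by rewrite mulrA.
Qed.

Lemma cyc_ncyc a : (cyc a == ncyc a) = false.
Proof. by case: a => [[[] []] []]. Qed.
Lemma ncyc_cyc a : (ncyc a == cyc a) = false.
Proof. by case: a => [[[] []] []]. Qed.

Lemma pgyn (R : realType) : p_gynin (p_ex R) = 1.
Proof.
rewrite /p_gynin /p_ex.
under eq_bigr do rewrite eqxx cyc_ncyc ncyc_cyc.
rewrite sum_bool3 /=. by field.
Qed.

Lemma id_li (R : realType) : local_intervention (id_intervention R).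
Proof.
split; first by move=> *; rewrite /id_intervention ler0n.
move=> a i; rewrite sum_pair !big_bool /id_intervention /=.
by case: a; case: i => /=; rewrite ?addr0 ?add0r.
Qed.

Lemma core (R : realType) (m1 m2 m3 : bool -> bool -> R) :
  (forall i, m1 true i + m1 false i = 1) ->
  (forall i, m2 true i + m2 false i = 1) ->
  (forall i, m3 true i + m3 false i = 1) ->
  \sum_(o : bool * bool * bool)
     (2^-1 * (m1 o.1.1 (cyc o).1.1 * m2 o.1.2 (cyc o).1.2 * m3 o.2 (cyc o).2) +
      2^-1 * (m1 o.1.1 (ncyc o).1.1 * m2 o.1.2 (ncyc o).1.2 * m3 o.2 (ncyc o).2)) = 1.
Proof.
move=> h1 h2 h3.
have e1 i : m1 true i = 1 - m1 false i by rewrite -(h1 i) addrK.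
have e2 i : m2 true i = 1 - m2 false i by rewrite -(h2 i) addrK.
have e3 i : m3 true i = 1 - m3 false i by rewrite -(h3 i) addrK.
rewrite sum_bool3 /cyc /ncyc /= !e1 !e2 !e3. by field.
Qed.

Lemma W_cd (R : realType) : cond_distr (W_BFW R).
Proof.
split.
  move=> i o; rewrite /W_BFW.
  by apply: addr_ge0; apply: mulr_ge0; rewrite ?invr_ge0 ?ler0n.
move=> o; rewrite /W_BFW big_split /= -!mulr_sumr !sum_delta1. by field.
Qed.

Lemma li_sum {R : realType} {X O A I : finType} {M : X -> O -> A -> I -> R} :
  local_intervention M -> forall a i,
  \sum_(o : O) \sum_(x : X) M x o a i = 1.
Proof.
move=> [_ h] a i; rewrite -(h a i) sum_pair exchange_big /=. by [].
Qed.

Lemma half_delta (R : realType) (T : finType) (u : T) (G : T -> R) :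
  \sum_i G i * (2^-1 * (i == u)%:R) = 2^-1 * G u.
Proof.
rewrite (eq_bigr (fun i => 2^-1 * ((i == u)%:R * G i))).
  by rewrite -mulr_sumr sum_delta.
by move=> i _; rewrite mulrCA [G i * _]mulrC.
Qed.

Lemma W_cp (R : realType) : classical_process (W_BFW R).
Proof.
split; first exact: W_cd.
move=> X1 X2 X3 A1 A2 A3 M1 M2 M3 h1 h2 h3.
have [p1 _] := h1; have [p2 _] := h2; have [p3 _] := h3.
have [pW _] := W_cd R.
split.
  move=> x a; rewrite /induced; apply: sumr_ge0 => i _; apply: sumr_ge0 => o _.
  by rewrite !mulr_ge0.
move=> a.
set m1 := fun o i => \sum_x M1 x o a.1.1 i.
set m2 := fun o i => \sum_x M2 x o a.1.2 i.
set m3 := fun o i => \sum_x M3 x o a.2 i.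
transitivity (\sum_i \sum_o m1 o.1.1 i.1.1 * m2 o.1.2 i.1.2 * m3 o.2 i.2 * W_BFW R i o).
  rewrite /induced exchange_big; apply: eq_bigr => i _.
  rewrite exchange_big; apply: eq_bigr => o _.
  rewrite -mulr_suml; congr (_ * _).
  exact: (@sum_triple_prod R X1 X2 X3 (fun x => M1 x o.1.1 a.1.1 i.1.1)
            (fun x => M2 x o.1.2 a.1.2 i.1.2) (fun x => M3 x o.2 a.2 i.2)).
rewrite exchange_big /=.
rewrite -(@core R m1 m2 m3); last 3 first.
- by move=> i; rewrite -(li_sum h1 a.1.1 i) big_bool.
- by move=> i; rewrite -(li_sum h2 a.1.2 i) big_bool.
- by move=> i; rewrite -(li_sum h3 a.2 i) big_bool.
apply: eq_bigr => o _.
rewrite /W_BFW.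
under eq_bigr do rewrite mulrDr.
rewrite big_split /=; congr (_ + _); exact: half_delta.
Qed.

Lemma id_induced (R : realType) x a : p_ex R x a =
     induced (id_intervention R) (id_intervention R) (id_intervention R) (W_BFW R) x a.
Proof.
rewrite /induced.
have e i o : id_intervention R x.1.1 o.1.1 a.1.1 i.1.1 *
   id_intervention R x.1.2 o.1.2 a.1.2 i.1.2 * id_intervention R x.2 o.2 a.2 i.2 =
   (i == x)%:R * (o == a)%:R.
  rewrite /id_intervention.
  case: i x o a => [[i1 i2] i3] [[x1 x2] x3] [[o1 o2] o3] [[a1 a2] a3] /=.
  rewrite -!natrM !mulnb !xpair_eqE [x1 == i1]eq_sym [x2 == i2]eq_sym [x3 == i3]eq_sym.
  congr (_%:R).
  by case: (i1 == x1); case: (i2 == x2); case: (i3 == x3);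
     case: (o1 == a1); case: (o2 == a2); case: (o3 == a3).
under eq_bigr do under eq_bigr do rewrite e -mulrA.
under eq_bigr do rewrite -mulr_sumr sum_delta.
by rewrite sum_delta.
Qed.


Lemma sum_unit (R : realType) (F : unit -> R) : \sum_(u : unit) F u = F tt.
Proof. by rewrite (bigD1 tt) //= big1 ?addr0 // => -[]. Qed.

Lemma pos_exists (R : realType) (T : finType) (F : T -> R) :
  (forall t, 0 <= F t) -> \sum_t F t = 1 -> exists t, 0 < F t.
Proof.
move=> h1 h2; case: (pickP (fun t => 0 < F t)) => [t ht|h]; first by exists t.
exfalso; move: h2; rewrite big1 => [/eqP|t _]; first by rewrite eq_sym oner_eq0.
by apply/eqP; rewrite eq_le h1 andbT leNgt h.
Qed.

Lemma pf_fix (R : realType) (I1 I2 I3 O1 O2 O3 : finType)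
  (om : O1 * O2 * O3 -> I1 * I2 * I3) :
  process_function R om -> forall (G1 : I1 -> O1) (G2 : I2 -> O2) (G3 : I3 -> O3),
  (exists i, i = om (G1 i.1.1, G2 i.1.2, G3 i.2)) /\
  (forall i i', i = om (G1 i.1.1, G2 i.1.2, G3 i.2) ->
                i' = om (G1 i'.1.1, G2 i'.1.2, G3 i'.2) -> i = i').
Proof.
move=> [_ H] G1 G2 G3.
pose N1 : unit -> O1 -> unit -> I1 -> R := fun _ o _ i => (o == G1 i)%:R.
pose N2 : unit -> O2 -> unit -> I2 -> R := fun _ o _ i => (o == G2 i)%:R.
pose N3 : unit -> O3 -> unit -> I3 -> R := fun _ o _ i => (o == G3 i)%:R.
have li (O I : finType) (G : I -> O) :
    local_intervention (fun (_ : unit) o (_ : unit) i => (o == G i)%:R :> R).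
  split; first by move=> *; rewrite ler0n.
  by move=> a i; rewrite sum_pair sum_unit sum_delta1.
have [_ hs] := H _ _ _ _ _ _ N1 N2 N3 (li _ _ G1) (li _ _ G2) (li _ _ G3).
have := hs (tt, tt, tt).
rewrite sum_pair sum_pair sum_unit sum_unit sum_unit /induced /=.
have e i o : N1 tt o.1.1 tt i.1.1 * N2 tt o.1.2 tt i.1.2 * N3 tt o.2 tt i.2 =
             (o == (G1 i.1.1, G2 i.1.2, G3 i.2))%:R.
  exact: (@ind3 R _ _ _ o (G1 i.1.1, G2 i.1.2, G3 i.2)).
under eq_bigr do under eq_bigr do rewrite e.
under eq_bigr do rewrite sum_delta.
rewrite /delta_fun => hc.
split.
  case: (pickP (fun i => i == om (G1 i.1.1, G2 i.1.2, G3 i.2))) => [i /eqP hi|h].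
    by exists i.
  exfalso; move: hc; rewrite big1 => [/eqP|i _]; first by rewrite eq_sym oner_eq0.
  by rewrite h.
move=> i i' hi hi'; apply/eqP; apply/negPn/negP => ne.
move: hc; rewrite (bigD1 i) //= (bigD1 i') /=; last by rewrite eq_sym.
rewrite -hi -hi' !eqxx /=.
have : 0 <= \sum_(k | (k != i) && (k != i')) (k == om (G1 k.1.1, G2 k.1.2, G3 k.2))%:R :> R.
  by apply: sumr_ge0 => *; rewrite ler0n.
move=> h0 h1; have : (1 + (1 + 0) <= 1 :> R).
  by rewrite -[X in _ <= X]h1 lerD2l lerD2l.
by rewrite addr0 -[X in _ <= X]addr0 lerD2l ler10.
Qed.


Definition win (x a : bool * bool * bool) := (x == cyc a) || (x == ncyc a).

Lemma game1 b c (x y : bool * bool * bool) :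
  win x (false, b, c) -> win y (true, b, c) -> x.1.2 = y.1.2 -> x.2 = y.2 -> False.
Proof.
case: x y => [[x1 x2] x3] [[y1 y2] y3] /= + + e2 e3; subst.
by case: b; case: c; case: x1; case: y1; case: y2; case: y3.
Qed.

Lemma game2 a c (x y : bool * bool * bool) :
  win x (a, false, c) -> win y (a, true, c) -> x.1.1 = y.1.1 -> x.2 = y.2 -> False.
Proof.
case: x y => [[x1 x2] x3] [[y1 y2] y3] /= + + e2 e3; subst.
by case: a; case: c; case: x2; case: y1; case: y2; case: y3.
Qed.

Lemma game3 a b (x y : bool * bool * bool) :
  win x (a, b, false) -> win y (a, b, true) -> x.1.1 = y.1.1 -> x.1.2 = y.1.2 -> False.
Proof.
case: x y => [[x1 x2] x3] [[y1 y2] y3] /= + + e2 e3; subst.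
by case: a; case: b; case: x3; case: y1; case: y2; case: y3.
Qed.

Lemma final (T1 T2 T3 : eqType) (S1 : bool -> bool -> T1) (S2 : bool -> bool -> T2)
  (S3 : bool -> bool -> T3) :
  (forall b c, S2 false c != S2 true c \/ S3 false b != S3 true b) ->
  (forall a c, S1 false c != S1 true c \/ S3 a false != S3 a true) ->
  (forall a b, S1 b false != S1 b true \/ S2 a false != S2 a true) ->
  (forall c, S1 false c = S1 true c \/ S2 false c = S2 true c) ->
  (forall a, S2 a false = S2 a true \/ S3 a false = S3 a true) ->
  (forall b, S1 b false = S1 b true \/ S3 false b = S3 true b) ->
  [\/ S1 false false = S1 true true, S2 false false = S2 true true
    | S3 false false = S3 true true] -> False.
Proof.
move=> P1 P2 P3 X12 X23 X31 C.
have caseB c0 : S2 false c0 = S2 true c0 -> False.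
  move=> e.
  have n31 b : S3 false b != S3 true b by case: (P1 b c0) => [|//]; rewrite e eqxx.
  have e13 b : S1 b false = S1 b true.
    by case: (X31 b) => [h|h]; [exact: h | move: (n31 b); rewrite h eqxx].
  have n23 a : S2 a false != S2 a true by case: (P3 a false) => [|//]; rewrite e13 eqxx.
  have e32 a : S3 a false = S3 a true.
    by case: (X23 a) => [h|h]; [move: (n23 a); rewrite h eqxx | exact: h].
  have n12 c : S1 false c != S1 true c by case: (P2 false c) => [//|]; rewrite e32 eqxx.
  have e21 c : S2 false c = S2 true c.
    by case: (X12 c) => [h|h]; [move: (n12 c); rewrite h eqxx | exact: h].
  case: C => h.
  - by move: (n12 false); rewrite h -(e13 true) eqxx.
  - by move: (n23 false); rewrite h (e21 true) eqxx.
  - by move: (n31 false); rewrite h (e32 true) eqxx.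
case: (boolP (S2 false false == S2 true false)) => [/eqP/caseB//|n0].
case: (boolP (S2 false true == S2 true true)) => [/eqP/caseB//|n1].
have n21 c : S2 false c != S2 true c by case: c.
have e12 c : S1 false c = S1 true c.
  by case: (X12 c) => [h|h]; [exact: h | move: (n21 c); rewrite h eqxx].
have n32 a : S3 a false != S3 a true by case: (P2 a false) => [|//]; rewrite e12 eqxx.
have e23 a : S2 a false = S2 a true.
  by case: (X23 a) => [h|h]; [exact: h | move: (n32 a); rewrite h eqxx].
have n13 b : S1 b false != S1 b true by case: (P3 false b) => [//|]; rewrite e23 eqxx.
have e31 b : S3 false b = S3 true b.
  by case: (X31 b) => [h|h]; [move: (n13 b); rewrite h eqxx | exact: h].
case: C => h.
- by move: (n13 false); rewrite h (e12 true) eqxx.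
- by move: (n21 false); rewrite h (e23 true) eqxx.
- by move: (n32 false); rewrite h (e31 true) eqxx.
Qed.


Lemma comb (T1 T2 T3 : eqType) (s : bool * bool * bool -> T1 * T2 * T3)
  (f1 : bool -> T1 -> bool) (f2 : bool -> T2 -> bool) (f3 : bool -> T3 -> bool) :
  (forall a a', a != a' ->
     (a.1.1 != a'.1.1 -> (s a).1.1 != (s a').1.1) ->
     (a.1.2 != a'.1.2 -> (s a).1.2 != (s a').1.2) ->
     (a.2 != a'.2 -> (s a).2 != (s a').2) -> False) ->
  (forall a, win (f1 a.1.1 (s a).1.1, f2 a.1.2 (s a).1.2, f3 a.2 (s a).2) a) -> False.
Proof.
move=> T W.
have TP a a' : a != a' ->
   [\/ (a.1.1 != a'.1.1) && ((s a).1.1 == (s a').1.1),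
       (a.1.2 != a'.1.2) && ((s a).1.2 == (s a').1.2) |
       (a.2 != a'.2) && ((s a).2 == (s a').2)].
  move=> ne.
  case: (boolP ((a.1.1 != a'.1.1) && ((s a).1.1 == (s a').1.1))) => [h|h1]; first by constructor 1.
  case: (boolP ((a.1.2 != a'.1.2) && ((s a).1.2 == (s a').1.2))) => [h|h2]; first by constructor 2.
  case: (boolP ((a.2 != a'.2) && ((s a).2 == (s a').2))) => [h|h3]; first by constructor 3.
  exfalso; apply: (T a a' ne).
  - by move=> d; move: h1; rewrite d.
  - by move=> d; move: h2; rewrite d.
  - by move=> d; move: h3; rewrite d.
have I1 x b c : (s (x, b, c)).1.1 = (s (false, b, c)).1.1.
  case: x => //; apply/eqP; case: (TP (true, b, c) (false, b, c)) => //=;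
  by rewrite ?eqxx ?andbF.
have I2 a x c : (s (a, x, c)).1.2 = (s (a, false, c)).1.2.
  case: x => //; apply/eqP; case: (TP (a, true, c) (a, false, c)) => //=;
  by rewrite ?eqxx ?andbF ?xpair_eqE ?eqxx ?andbF.
have I3 a b x : (s (a, b, x)).2 = (s (a, b, false)).2.
  case: x => //; apply/eqP; case: (TP (a, b, true) (a, b, false)) => //=;
  by rewrite ?eqxx ?andbF ?xpair_eqE ?eqxx ?andbF.
pose S1 b c := (s (false, b, c)).1.1.
pose S2 a c := (s (a, false, c)).1.2.
pose S3 a b := (s (a, b, false)).2.
apply: (@final _ _ _ S1 S2 S3).
- move=> b c; rewrite /S2 /S3 -(I2 false b c) -(I2 true b c) -(I3 false b c) -(I3 true b c).
  case: (boolP ((s (false, b, c)).1.2 == (s (true, b, c)).1.2)) => [/eqP e2|]; last by left.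
  case: (boolP ((s (false, b, c)).2 == (s (true, b, c)).2)) => [/eqP e3|]; last by right.
  exfalso; apply: (game1 _ _ _ _ (W (false, b, c)) (W (true, b, c))) => /=.
    by rewrite e2. by rewrite e3.
- move=> a c; rewrite /S1 /S3 -(I1 a false c) -(I1 a true c) -(I3 a false c) -(I3 a true c).
  case: (boolP ((s (a, false, c)).1.1 == (s (a, true, c)).1.1)) => [/eqP e2|]; last by left.
  case: (boolP ((s (a, false, c)).2 == (s (a, true, c)).2)) => [/eqP e3|]; last by right.
  exfalso; apply: (game2 _ _ _ _ (W (a, false, c)) (W (a, true, c))) => /=.
    by rewrite e2. by rewrite e3.
- move=> a b; rewrite /S1 /S2 -(I1 a b false) -(I1 a b true) -(I2 a b false) -(I2 a b true).
  case: (boolP ((s (a, b, false)).1.1 == (s (a, b, true)).1.1)) => [/eqP e2|]; last by left.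
  case: (boolP ((s (a, b, false)).1.2 == (s (a, b, true)).1.2)) => [/eqP e3|]; last by right.
  exfalso; apply: (game3 _ _ _ _ (W (a, b, false)) (W (a, b, true))) => /=.
    by rewrite e2. by rewrite e3.
- move=> c; rewrite /S1 /S2 -(I1 true true c) -(I2 true true c).
  case: (TP (false, false, c) (true, true, c)) => [|h|h|h]; first (by rewrite !xpair_eqE /= ?andbF ?andFb); move: h => /=.
  + by move/eqP; left.
  + by move/eqP; right.
  + by rewrite eqxx.
- move=> a; rewrite /S2 /S3 -(I2 a true true) -(I3 a true true).
  case: (TP (a, false, false) (a, true, true)) => [|h|h|h]; first (by rewrite !xpair_eqE /= ?andbF ?andFb); move: h => /=.
  + by rewrite eqxx.
  + by move/eqP; left.
  + by move/eqP; right.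
- move=> b; rewrite /S1 /S3 -(I1 true b true) -(I3 true b true).
  case: (TP (false, b, false) (true, b, true)) => [|h|h|h]; first (by rewrite !xpair_eqE /= ?andbF ?andFb); move: h => /=.
  + by move/eqP; left.
  + by rewrite eqxx.
  + by move/eqP; right.
- rewrite /S1 /S2 /S3 -(I1 true true true) -(I2 true true true) -(I3 true true true).
  case: (TP (false, false, false) (true, true, true)) => [|h|h|h]; first (by rewrite !xpair_eqE /= ?andbF ?andFb); move: h => /= /eqP h.
  + by constructor 1.
  + by constructor 2.
  + by constructor 3.
Qed.


Lemma notDC (R : realType) : ~ DC (p_ex R).
Proof.
move=> [I1 [I2 [I3 [O1 [O2 [O3 [M1 [M2 [M3 [W
  [hM1 [hM2 [hM3 [hW [[n [lam [om [hom [hlam [hsum hWe]]]]]] hp]]]]]]]]]]]]]]].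
have [j lj] := @pos_exists R _ _ hlam hsum.
have ch (O I : finType) (M : bool -> O -> bool -> I -> R) : local_intervention M ->
    exists r : bool * I -> bool * O, forall ai, 0 < M (r ai).1 (r ai).2 ai.1 ai.2.
  move=> [h1 h2].
  have : forall ai : bool * I, exists xo : bool * O, 0 < M xo.1 xo.2 ai.1 ai.2.
    by move=> [a i]; apply: (@pos_exists R) => [[x o]|]; [exact: h1 | exact: h2].
  by case/fin_all_exists => r hr; exists r.
have [r1 hr1] := ch _ _ _ hM1.
have [r2 hr2] := ch _ _ _ hM2.
have [r3 hr3] := ch _ _ _ hM3.
pose g1 a i := (r1 (a, i)).2. pose g2 a i := (r2 (a, i)).2. pose g3 a i := (r3 (a, i)).2.
pose f1 a i := (r1 (a, i)).1. pose f2 a i := (r2 (a, i)).1. pose f3 a i := (r3 (a, i)).1.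
have PF := @pf_fix R _ _ _ _ _ _ _ (hom j).
have : forall a : bool * bool * bool, exists i : I1 * I2 * I3,
    i = om j (g1 a.1.1 i.1.1, g2 a.1.2 i.1.2, g3 a.2 i.2).
  by move=> a; case: (PF (g1 a.1.1) (g2 a.1.2) (g3 a.2)).
case/fin_all_exists => s hs.
have [pM1 _] := hM1; have [pM2 _] := hM2; have [pM3 _] := hM3.
have [[pW _] _] := hW.
apply: (@comb _ _ _ s f1 f2 f3).
- move=> a a' ne c1 c2 c3.
  pose h1 i := if i == (s a').1.1 then a'.1.1 else a.1.1.
  pose h2 i := if i == (s a').1.2 then a'.1.2 else a.1.2.
  pose h3 i := if i == (s a').2 then a'.2 else a.2.
  have [_ U] := PF (fun i => g1 (h1 i) i) (fun i => g2 (h2 i) i) (fun i => g3 (h3 i) i).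
  have ha1 : h1 (s a).1.1 = a.1.1.
    rewrite /h1; case: eqP => // e; case: (boolP (a.1.1 == a'.1.1)) => [/eqP -> //|d].
    by move: (c1 d); rewrite e eqxx.
  have ha2 : h2 (s a).1.2 = a.1.2.
    rewrite /h2; case: eqP => // e; case: (boolP (a.1.2 == a'.1.2)) => [/eqP -> //|d].
    by move: (c2 d); rewrite e eqxx.
  have ha3 : h3 (s a).2 = a.2.
    rewrite /h3; case: eqP => // e; case: (boolP (a.2 == a'.2)) => [/eqP -> //|d].
    by move: (c3 d); rewrite e eqxx.
  have hb1 : h1 (s a').1.1 = a'.1.1 by rewrite /h1 eqxx.
  have hb2 : h2 (s a').1.2 = a'.1.2 by rewrite /h2 eqxx.
  have hb3 : h3 (s a').2 = a'.2 by rewrite /h3 eqxx.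
  have E : s a = s a'.
    apply: U; first by rewrite ha1 ha2 ha3; exact: hs.
    by rewrite hb1 hb2 hb3; exact: hs.
  have tp (x : bool * bool * bool) : x = (x.1.1, x.1.2, x.2) by case: x => [[]].
  move: ne; rewrite (tp a) (tp a') -ha1 -ha2 -ha3 E hb1 hb2 hb3.
  by rewrite eqxx.
- move=> a; set x := (f1 a.1.1 (s a).1.1, f2 a.1.2 (s a).1.2, f3 a.2 (s a).2).
  rewrite /win; case: (boolP (x == cyc a)) => // c1; case: (boolP (x == ncyc a)) => // c2.
  exfalso.
  have h0 : p_ex R x a = 0 by rewrite /p_ex (negbTE c1) (negbTE c2) !mulr0 addr0.
  set i := s a. set o := (g1 a.1.1 i.1.1, g2 a.1.2 i.1.2, g3 a.2 i.2).
  have hpos : 0 < M1 x.1.1 o.1.1 a.1.1 i.1.1 * M2 x.1.2 o.1.2 a.1.2 i.1.2 *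
                  M3 x.2 o.2 a.2 i.2 * W i o.
    apply: mulr_gt0; [apply: mulr_gt0; [apply: mulr_gt0|]|].
    - exact: (hr1 (a.1.1, i.1.1)).
    - exact: (hr2 (a.1.2, i.1.2)).
    - exact: (hr3 (a.2, i.2)).
    - rewrite hWe; apply: (lt_le_trans _ (@le_sum_term R _ _ j _)); last first.
        by move=> k; rewrite /delta_fun mulr_ge0 ?ler0n.
      by rewrite /delta_fun /i /o -(hs a) eqxx mulr1.
  have nn (k : I1 * I2 * I3) (l : O1 * O2 * O3) : 0 <= M1 x.1.1 l.1.1 a.1.1 k.1.1 * M2 x.1.2 l.1.2 a.1.2 k.1.2 *
                  M3 x.2 l.2 a.2 k.2 * W k l.
    apply: mulr_ge0; [apply: mulr_ge0; [apply: mulr_ge0|]|]; [exact: pM1|exact: pM2|exact: pM3|exact: pW].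
  have : 0 < induced M1 M2 M3 W x a.
    apply: (lt_le_trans hpos); rewrite /induced.
    apply: le_trans (@le_sum_term R _ _ i _).
      by rewrite (bigD1 o) //= lerDl sumr_ge0 // => k _; apply: nn.
    by move=> k; apply: sumr_ge0 => *; apply: nn.

  by move=> hh; move: (hp x a); rewrite h0 => e; move: hh; rewrite -e ltxx.
Qed.

Theorem theorem10 (R : realType) :
  p_gynin (p_ex R) = 1 /\
  local_intervention (id_intervention R) /\
  classical_process (W_BFW R) /\
  (forall x a, p_ex R x a =
     induced (id_intervention R) (id_intervention R) (id_intervention R) (W_BFW R) x a) /\
  PC (p_ex R) /\
  ~ DC (p_ex R) /\
  (forall p : corr R, DC p -> PC p) /\
  (exists p : corr R, PC p /\ ~ DC p).
Proof.
have pc : PC (p_ex R).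
  exists bool, bool, bool, bool, bool, bool.
  exists (id_intervention R), (id_intervention R), (id_intervention R), (W_BFW R).
  split; [exact: id_li | exact: id_li | exact: id_li | exact: W_cp | exact: id_induced].
split; first exact: pgyn.
split; first exact: id_li.
split; first exact: W_cp.
split; first exact: id_induced.
split; first exact: pc.
split; first exact: notDC.
split.
  move=> p [I1 [I2 [I3 [O1 [O2 [O3 [M1 [M2 [M3 [W [h1 [h2 [h3 [h4 [_ h5]]]]]]]]]]]]]]].
  exists I1, I2, I3, O1, O2, O3, M1, M2, M3, W; split => //.
exists (p_ex R); split; [exact: pc | exact: notDC].
Qed.
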